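(* Let $q$ be a prime power and let $n,k$ be integers with $5\le k$ and $k\le n-2\le q-2$. Let $\alpha_1,\dots,\alpha_n\in\mathbb{F}_q$ be pairwise distinct, let $G_{k-1,k-2}$ be the $k\times n$ matrix whose rows are $(\alpha_1^{e},\dots,\alpha_n^{e})$ for $e=0,1,\dots,k-3,k,k+1$, let $\mathbf{v}=(v_1,\dots,v_n)\in(\mathbb{F}_q^* )^n$, and let $C_{\mathbf v}$ be the linear code generated by $G_{k-1,k-2}\cdot\mathrm{diag}(v_1,\dots,v_n)$. Let $u_i=\prod_{j\ne i}(\alpha_i-\alpha_j)^{-1}$ for $1\le i\le n$ and $S_t=S_t(\alpha_1,\dots,\alpha_n)$. Then $C_{\mathbf v}$ is self-orthogonal if and only if there exists a polynomial $f(x)=f_0+f_1x+\dots+f_{n-2k}x^{n-2k}\in\mathbb{F}_q[x]$ such that (1) $v_i^2=u_if(\alpha_i)$ for all $1\le i\le n$; (2) $f_{n-2k-1}+f_{n-2k}S_1=0$; (3) $f_{n-2k-2}+f_{n-2k-1}S_1+f_{n-2k}S_2=0$; (4) $f_{n-2k-3}+f_{n-2k-2}S_1+f_{n-2k-1}S_2+f_{n-2k}S_3=0$, where $f_j=0$ for $j<0$.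
   Context: Convention: $0^0=1$. $S_t(x_1,\dots,x_m)=\sum_{t_1+\dots+t_m=t,\ t_i\ge0}x_1^{t_1}\cdots x_m^{t_m}$ is the complete homogeneous symmetric polynomial of degree $t$ ($S_0=1$). A linear code $C$ is self-orthogonal if $C\subseteq C^\perp$, where $C^\perp$ is the dual with respect to the Euclidean inner product $\langle x,y\rangle=\sum_i x_iy_i$. *)

(* Defs.v *)
From HB Require Import structures.
From mathcomp Require Import all_boot all_order all_algebra all_field.
Set Implicit Arguments. Unset Strict Implicit. Unset Printing Implicit Defensive.
Import Order.TTheory GRing.Theory Num.Theory.
Local Open Scope ring_scope.

Definition inner (F : fieldType) (n : nat) (x y : 'rV[F]_n) : F :=
  \sum_(i < n) x 0 i * y 0 i.

Definition self_orthogonal (F : fieldType) (m n : nat) (M : 'M[F]_(m, n)) : Prop :=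
  forall x y : 'rV[F]_n, (x <= M)%MS -> (y <= M)%MS -> inner x y = 0.

(* Exponent of row r of G_{k-1,k-2}: 0,1,...,k-3, then k, k+1. *)
Definition gexp (k : nat) (r : nat) : nat := if (r < k - 2)%N then r else (r + 2)%N.

Definition Gmat (F : fieldType) (k n : nat) (alpha : 'I_n -> F) : 'M[F]_(k, n) :=
  \matrix_(r < k, j < n) alpha j ^+ gexp k r.

Definition ucoef (F : fieldType) (n : nat) (alpha : 'I_n -> F) (i : 'I_n) : F :=
  \prod_(j < n | j != i) (alpha i - alpha j)^-1.

(* Complete homogeneous symmetric polynomial S_t evaluated at alpha. *)
Definition hsym (F : fieldType) (n : nat) (alpha : 'I_n -> F) (t : nat) : F :=
  \sum_(e : {ffun 'I_n -> 'I_t.+1} | (\sum_(i < n) (e i : nat) == t)%N)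
     \prod_(i < n) alpha i ^+ e i.

Definition coefz (F : fieldType) (f : {poly F}) (j : int) : F :=
  match j with Posz m => f`_m | Negz _ => 0 end.

(* Main.v *)
Require Import Defs.
From HB Require Import structures.
From mathcomp Require Import all_boot all_order all_algebra all_field.
From mathcomp Require Import zify ring.
Import Order.TTheory GRing.Theory Num.Theory.
Local Open Scope ring_scope.
Set Warnings "-all".

Lemma size_idx n : size (index_enum 'I_n) = n.
Proof. by rewrite -[in RHS](card_ord n) cardT enumT. Qed.


Lemma size_lin (F : fieldType) (c : F) : (size (1 - c%:P * 'X)%R <= 2)%N.
Proof.
rewrite (leq_trans (size_add _ _)) // size_opp geq_max size_poly1 /=.
rewrite (leq_trans (size_mul_leq _ _)) // size_polyX.
have := @size_polyC_leq1 F c; lia.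
Qed.

Lemma rev_size (F : fieldType) (I : Type) (r : seq I) (b : I -> F) :
  (size (\prod_(i <- r) (1 - (b i)%:P * 'X))%R <= (size r).+1)%N.
Proof.
elim: r => [|a r IH]; first by rewrite big_nil size_poly1.
rewrite big_cons (leq_trans (size_mul_leq _ _)) //=.
move: IH (@size_lin F (b a)); set A := size _; set B := size _; set C := size _; move=> h1 h2; lia.
Qed.

Lemma rev_prod (F : fieldType) (I : Type) (r : seq I) (b : I -> F) (x : F) :
  \sum_(j < (size r).+1) (\prod_(i <- r) (1 - (b i)%:P * 'X))`_j * x ^+ (size r - j)
  = \prod_(i <- r) (x - b i).
Proof.
elim: r => [|a r IH].
  by rewrite !big_nil big_ord_recl big_ord0 coef1 /= expr0 mulr1 addr0.
have hs := rev_size _ _ r b.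
rewrite big_cons [RHS]big_cons -IH /=.
set R := \prod_(i <- r) _; set m := size r.
have cR : forall j, ((1 - (b a)%:P * 'X) * R)`_j
    = R`_j - b a * (if j == 0%N then 0 else R`_j.-1).
  by move=> j; rewrite mulrBl mul1r coefB -mulrA coefCM coefXM.
under eq_bigr do rewrite cR mulrBl.
rewrite sumrB big_ord_recr /= [R`_m.+1]nth_default // mul0r addr0.
rewrite [X in _ - X]big_ord_recl /= mulr0 mul0r add0r.
rewrite mulrBl !big_distrr /=.
congr (_ - _); apply: eq_bigr => j _.
  rewrite subSn; last by have := ltn_ord j; lia.
  by rewrite exprS mulrCA.
by rewrite /bump /= add1n subSS mulrA.
Qed.

Lemma coef_pow_prod (F : fieldType) (n m : nat) (c : 'I_n -> F) p :
  ~~ (m %| p)%N -> (\prod_(i < n) (1 - ((c i)%:P * 'X) ^+ m))`_p = 0.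
Proof.
move: p; apply: (big_ind (fun q : {poly F} => forall p, ~~ (m %| p)%N -> q`_p = 0)).
- move=> p hp; rewrite coef1; case: eqP hp => // ->; by rewrite dvdn0.
- move=> q1 q2 h1 h2 p hp; rewrite coefM big1 // => j _.
  case: (boolP (m %| j)%N) => hj; last by rewrite h1 ?mul0r.
  rewrite h2 ?mulr0 //; apply: contra hp => hpj.
  have jp : (j <= p)%N by rewrite -ltnS.
  by rewrite -(subnK jp) dvdn_add.
- move=> i _ p hp.
  have p0 : p != 0%N by apply: contraNneq hp => ->; rewrite dvdn0.
  have pm : p != m by apply: contraNneq hp => ->; rewrite dvdnn.
  by rewrite exprMn -rmorphXn coefB coef1 coefCM coefXn (negbTE p0) (negbTE pm) mulr0 subr0.
Qed.

Lemma rec_uniq (F : fieldType) (r a b : nat -> F) t : r 0%N = 1 -> a 0%N = b 0%N ->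
  (forall s, (0 < s <= t)%N -> \sum_(j < s.+1) r j * a (s - j)%N = 0) ->
  (forall s, (0 < s <= t)%N -> \sum_(j < s.+1) r j * b (s - j)%N = 0) ->
  forall s, (s <= t)%N -> a s = b s.
Proof.
move=> r0 ab ha hb; elim/ltn_ind => s IH st.
case: s IH st => [|s] IH st; first done.
have ea := ha s.+1 st; have eb := hb s.+1 st.
rewrite big_ord_recl /= r0 mul1r subn0 in ea.
rewrite big_ord_recl /= r0 mul1r subn0 in eb.
have E : \sum_(i < s.+1) r (bump 0 i) * a (s.+1 - bump 0 i)%N
       = \sum_(i < s.+1) r (bump 0 i) * b (s.+1 - bump 0 i)%N.
  apply: eq_bigr => i _; rewrite IH //; rewrite /bump /=; have := ltn_ord i; lia.
move/eqP: ea; rewrite addr_eq0 => /eqP ->; move/eqP: eb; rewrite addr_eq0 => /eqP ->.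
by rewrite E.
Qed.

Section Core.
Variable F : fieldType.
Variable n : nat.
Variable alpha : 'I_n -> F.
Hypothesis halpha : injective alpha.

Definition Lsub (i : 'I_n) : {poly F} := \prod_(j < n | j != i) ('X - (alpha j)%:P).
Definition Pd (i : 'I_n) : F := \prod_(j < n | j != i) (alpha i - alpha j).

Lemma Pd_neq0 i : Pd i != 0.
Proof.
apply/prodf_neq0 => j ji; rewrite subr_eq0; apply/eqP => /halpha h.
by rewrite h eqxx in ji.
Qed.

Lemma u_Pd i : ucoef alpha i * Pd i = 1.
Proof. by rewrite /ucoef prodfV mulVf // Pd_neq0. Qed.

Lemma Lsub_monic i : Lsub i \is monic.
Proof. exact: monic_prod_XsubC. Qed.

Lemma Lsub_eval i j : (Lsub i).[alpha j] = if j == i then Pd i else 0.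
Proof.
rewrite /Lsub horner_prod; case: eqP => [->|/eqP ji].
  by apply: eq_bigr => l _; rewrite hornerXsubC.
by rewrite (bigD1 j) //= hornerXsubC subrr mul0r.
Qed.

Lemma size_Lsub i : size (Lsub i) = n.
Proof.
have h1 : \prod_(j < n) ('X - (alpha j)%:P) = ('X - (alpha i)%:P) * Lsub i.
  by rewrite (bigD1 i).
have := size_prod_XsubC (index_enum 'I_n) alpha.
rewrite h1 size_mul ?polyXsubC_eq0 ?monic_neq0 ?Lsub_monic // size_XsubC.
by rewrite size_idx /= => [[]].
Qed.

Lemma lagr (g : {poly F}) : (size g <= n)%N ->
  \sum_(i < n) ucoef alpha i * g.[alpha i] = g`_(n.-1).
Proof.
move=> hg.
pose h := \sum_(i < n) (ucoef alpha i * g.[alpha i]) *: Lsub i.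
have hh : forall j, h.[alpha j] = g.[alpha j].
  move=> j; rewrite /h horner_sum (bigD1 j) //= big1 ?addr0.
    by rewrite hornerZ Lsub_eval eqxx mulrAC u_Pd mul1r.
  by move=> i ij; rewrite hornerZ Lsub_eval eq_sym (negbTE ij) mulr0.
have sh : (size h <= n)%N.
  rewrite /h; apply: (big_ind (fun p : {poly F} => (size p <= n)%N)).
  - by rewrite size_poly0.
  - by move=> p q hp hq; rewrite (leq_trans (size_add p q)) // geq_max hp hq.
  - by move=> i _; rewrite (leq_trans (size_scale_leq _ _)) // size_Lsub.
have gh : g = h.
  apply/eqP; rewrite -subr_eq0; apply/negPn/negP => nz.
  have := max_poly_roots nz (rs := map alpha (enum 'I_n)).
  rewrite size_map size_enum_ord.
  have -> : all (root (g - h)) [seq alpha i | i <- enum 'I_n].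
    by apply/allP => x /mapP [j _ ->]; rewrite rootE hornerD hornerN hh subrr.
  rewrite map_inj_uniq ?enum_uniq // => /(_ isT isT).
  by rewrite ltnNge (leq_trans (size_add _ _)) // size_opp geq_max hg sh.
rewrite {2}gh /h coef_sum; apply: eq_bigr => i _.
rewrite coefZ -[in (Lsub i)`_ _](size_Lsub i) -lead_coefE.
by have /monicP -> := Lsub_monic i; rewrite mulr1.
Qed.

Definition sig (p : nat) : F := \sum_(i < n) ucoef alpha i * alpha i ^+ p.

Lemma sig_low p : (p.+1 < n)%N -> sig p = 0.
Proof.
move=> hp; rewrite /sig.
have := lagr ('X^p); rewrite size_polyXn coefXn.
under eq_bigr do rewrite hornerXn.
move=> ->; last by lia.
by case: eqP => //; lia.
Qed.

Lemma sig_top : (0 < n)%N -> sig n.-1 = 1.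
Proof.
move=> hn; rewrite /sig.
have := lagr ('X^(n.-1)); rewrite size_polyXn coefXn eqxx.
under eq_bigr do rewrite hornerXn.
by move=> ->; last by lia.
Qed.


Definition Rp : {poly F} := \prod_(j < n) (1 - (alpha j)%:P * 'X).

Lemma Rrev x : \sum_(j < n.+1) Rp`_j * x ^+ (n - j) = \prod_(j < n) (x - alpha j).
Proof. by have := rev_prod _ _ (index_enum 'I_n) alpha x; rewrite size_idx. Qed.

Lemma R0 : Rp`_0 = 1.
Proof.
rewrite -horner_coef0 /Rp horner_prod big1 // => i _.
by rewrite !hornerE subr0.
Qed.

Lemma sig_rec s : (0 < s <= n)%N -> \sum_(j < s.+1) Rp`_j * sig (s.-1 + (n - j)) = 0.
Proof.
move=> hs.
have E : \sum_(j < n.+1) Rp`_j * sig (s.-1 + (n - j)) = 0.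
  have H0 : \sum_(i < n) ucoef alpha i * alpha i ^+ s.-1 * \prod_(j < n) (alpha i - alpha j) = 0.
    by apply: big1 => i _; rewrite (bigD1 i) //= subrr mul0r mulr0.
  apply: etrans H0; symmetry; under eq_bigr do rewrite -Rrev big_distrr.
  rewrite exchange_big /=; apply: eq_bigr => j _.
  rewrite /sig big_distrr; apply: eq_bigr => i _.
  by rewrite exprD /=; ring.
rewrite (big_ord_widen _ (fun j => Rp`_j * sig (s.-1 + (n - j))) (_ : s.+1 <= n.+1)%N); last by lia.
rewrite -[X in _ = X]E [RHS](bigID (fun j : 'I_n.+1 => (j < s.+1)%N)) /= [X in _ = _ + X]big1 ?addr0 //.
move=> j hj; rewrite sig_low ?mulr0 //; have := ltn_ord j; lia.
Qed.

Definition Qt t : {poly F} := \prod_(i < n) \sum_(j < t.+1) ((alpha i)%:P * 'X) ^+ j.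

Lemma RQ t : Rp * Qt t = \prod_(i < n) (1 - ((alpha i)%:P * 'X) ^+ t.+1).
Proof.
rewrite /Rp /Qt -big_split /=; apply: eq_bigr => i _.
have := subrXX 1 ((alpha i)%:P * 'X) t.+1; rewrite expr1n => ->.
by congr (_ * _); apply: eq_bigr => j _; rewrite expr1n mul1r.
Qed.

Lemma Qt0 t : (Qt t)`_0 = 1.
Proof.
rewrite -horner_coef0 /Qt horner_prod big1 // => i _.
rewrite horner_sum big_ord_recl big1 ?addr0; first by rewrite expr0 hornerC.
by move=> j _; rewrite !hornerE expr0n.
Qed.

Lemma Qt_hsym t : (Qt t)`_t = hsym alpha t.
Proof.
rewrite /Qt bigA_distr_bigA /= coef_sum /hsym [RHS]big_mkcond /=; apply: eq_bigr => f _.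
rewrite (eq_bigr (fun i => (alpha i ^+ f i)%:P * 'X^(f i))); last first.
  by move=> i _; rewrite exprMn rmorphXn.
rewrite big_split /= -rmorph_prod prodrXr coefCM coefXn eq_sym.
by case: (_ == _); rewrite ?mulr1 ?mulr0.
Qed.

Lemma sig_h t : (0 < t)%N -> (t <= n)%N -> sig (n.-1 + t) = hsym alpha t.
Proof.
move=> t0 tn; rewrite -Qt_hsym; symmetry.
apply: (@rec_uniq F (fun j => Rp`_j) (fun l => (Qt t)`_l)
   (fun l => sig (n.-1 + l)) t) => //.
- exact: R0.
- by rewrite Qt0 addn0 sig_top //; lia.
- move=> s hs; rewrite -coefM RQ coef_pow_prod //.
  apply/negP => /dvdn_leq; lia.
- move=> s hs; transitivity (\sum_(j < s.+1) Rp`_j * sig (s.-1 + (n - j))).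
    by apply: eq_bigr => j _; congr (_ * sig _); have := ltn_ord j; lia.
  by apply: sig_rec; lia.
Qed.

Lemma Lam (g : {poly F}) : (3 <= n)%N -> (size g <= n + 3)%N ->
  \sum_(i < n) ucoef alpha i * g.[alpha i] =
  g`_(n.-1) + g`_n * hsym alpha 1 + g`_(n.+1) * hsym alpha 2 + g`_(n.+2) * hsym alpha 3.
Proof.
move=> n3 hg.
under eq_bigr do rewrite (horner_coef_wide _ hg) big_distrr.
rewrite exchange_big /=.
rewrite (eq_bigr (fun j : 'I_(n+3) => g`_j * sig j)); last first.
  by move=> j _; rewrite /sig big_distrr; apply: eq_bigr => i _ /=; rewrite mulrCA.
rewrite -(big_mkord xpredT (fun j => g`_j * sig j)).
have hcut : (n.-1 <= n + 3)%N by lia.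
rewrite (@big_cat_nat _ _ _ n.-1) //=.
rewrite big_nat_cond big1 ?add0r; last first.
  by move=> j /andP [/andP [_ hj] _]; rewrite sig_low ?mulr0 //; lia.
rewrite big_ltn; last by lia.
rewrite big_ltn; last by lia.
rewrite big_ltn; last by lia.
rewrite big_ltn; last by lia.
rewrite big_geq ?addr0; last by lia.
have e0 : n.-1.+1 = n by lia.
rewrite e0 sig_top; last by lia.
have s1 : sig n = hsym alpha 1.
  have h := sig_h 1 isT; rewrite -h; [congr sig | ]; lia.
have s2 : sig n.+1 = hsym alpha 2.
  have h := sig_h 2 isT; rewrite -h; [congr sig | ]; lia.
have s3 : sig n.+2 = hsym alpha 3.
  have h := sig_h 3 isT; rewrite -h; [congr sig | ]; lia.
by rewrite s1 s2 s3 mulr1 !addrA.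
Qed.
End Core.

Lemma so_iff (F : fieldType) m nn (M : 'M[F]_(m, nn)) :
  self_orthogonal M <-> forall r s, inner (row r M) (row s M) = 0.
Proof.
split=> [H r s|H x y /submxP [D ->] /submxP [E ->]]; first by apply: H; apply: row_sub.
have MM : M *m M^T = 0.
  apply/matrixP => r s; rewrite !mxE; apply: etrans (H r s); rewrite /inner; apply: eq_bigr => i _.
  by rewrite !mxE.
have -> : inner (D *m M) (E *m M) = ((D *m M) *m (E *m M)^T) 0 0.
  by rewrite mxE /inner; apply: eq_bigr => i _; rewrite !mxE.
by rewrite trmx_mul mulmxA -(mulmxA D) MM mulmx0 mul0mx mxE.
Qed.

Lemma inner_rows (F : fieldType) k n (alpha : 'I_n -> F) (v : 'I_n -> F) r s :
  inner (row r (Gmat k alpha *m diag_mx (\row_j v j)))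
        (row s (Gmat k alpha *m diag_mx (\row_j v j)))
  = \sum_(i < n) v i ^+ 2 * alpha i ^+ (gexp k r + gexp k s).
Proof.
rewrite /inner; apply: eq_bigr => i _; rewrite mul_mx_diag !mxE.
by rewrite exprD; ring.
Qed.

Lemma coefMXn_z (F : fieldType) (f : {poly F}) e p :
  (f * 'X^e)`_p = coefz f (p%:Z - e%:Z).
Proof.
rewrite coefMXn; case: ltnP => h.
  by have -> : p%:Z - e%:Z = Negz (e - p).-1 by rewrite NegzE; lia.
by have -> : p%:Z - e%:Z = Posz (p - e) by lia.
Qed.

Lemma coefz_big (F : fieldType) (f : {poly F}) (j : int) :
  (size f)%:Z <= j -> coefz f j = 0.
Proof.
case: j => [m|m] //= h; apply: nth_default; lia.
Qed.

Lemma LamX (F : fieldType) n (alpha : 'I_n -> F) (halpha : injective alpha)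
  (f : {poly F}) e : (3 <= n)%N -> (size f + e <= n + 3)%N ->
  \sum_(i < n) ucoef alpha i * (f * 'X^e).[alpha i] =
  coefz f (n%:Z - 1 - e%:Z) + coefz f (n%:Z - e%:Z) * hsym alpha 1
  + coefz f (n%:Z + 1 - e%:Z) * hsym alpha 2 + coefz f (n%:Z + 2 - e%:Z) * hsym alpha 3.
Proof.
move=> n3 hs.
have sz : (size (f * 'X^e)%R <= n + 3)%N.
  apply/leq_sizeP => p hp; rewrite coefMXn; case: ifP => // _.
  apply: nth_default; move: hs hp; set A := size _ => h1 h2. lia.
rewrite (Lam _ _ _ halpha _ n3 sz) !coefMXn_z.
have -> : (n.-1)%:Z - e%:Z = n%:Z - 1 - e%:Z by lia.
have -> : (n.+1)%:Z - e%:Z = n%:Z + 1 - e%:Z by lia.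
have -> : (n.+2)%:Z - e%:Z = n%:Z + 2 - e%:Z by lia.
by [].
Qed.

Theorem theorem3p13 (F : finFieldType) (n k : nat)
  (hk5 : (5 <= k)%N) (hkn : (k <= n - 2)%N) (hnq : (n - 2 <= #|F| - 2)%N)
  (alpha : 'I_n -> F) (halpha : injective alpha)
  (v : 'I_n -> F) (hv : forall i, v i != 0) :
  self_orthogonal (Gmat k alpha *m diag_mx (\row_j v j))
  <->
  exists f : {poly F},
    (size f)%:Z <= n%:Z - 2 * k%:Z + 1 /\
    (forall i : 'I_n, v i ^+ 2 = ucoef alpha i * f.[alpha i]) /\
    coefz f (n%:Z - 2 * k%:Z - 1) + coefz f (n%:Z - 2 * k%:Z) * hsym alpha 1 = 0 /\
    coefz f (n%:Z - 2 * k%:Z - 2) + coefz f (n%:Z - 2 * k%:Z - 1) * hsym alpha 1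
      + coefz f (n%:Z - 2 * k%:Z) * hsym alpha 2 = 0 /\
    coefz f (n%:Z - 2 * k%:Z - 3) + coefz f (n%:Z - 2 * k%:Z - 2) * hsym alpha 1
      + coefz f (n%:Z - 2 * k%:Z - 1) * hsym alpha 2
      + coefz f (n%:Z - 2 * k%:Z) * hsym alpha 3 = 0.
Proof.
have n3 : (3 <= n)%N by lia.
have n0 : (0 < n)%N by lia.
pose i0 : 'I_n := Ordinal n0.
pose E e := \sum_(i < n) v i ^+ 2 * alpha i ^+ e.
have ErelF : forall f : {poly F}, (forall i, v i ^+ 2 = ucoef alpha i * f.[alpha i]) ->
    forall e, E e = \sum_(i < n) ucoef alpha i * (f * 'X^e).[alpha i].
  move=> f hf e; apply: eq_bigr => i _; by rewrite hornerM hornerXn hf mulrA.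
have gl : forall r, (r < k - 2)%N -> gexp k r = r by move=> r h; rewrite /gexp h.
have gh : forall r, (k - 2 <= r)%N -> gexp k r = (r + 2)%N.
  by move=> r h; rewrite /gexp ltnNge h.
rewrite so_iff.
split=> [H|[f [hs [hv2 [c1 [c2 c3]]]]]].
- have Hex : forall e a b, (a < k)%N -> (b < k)%N -> (gexp k a + gexp k b)%N = e -> E e = 0.
    move=> e a b ha hb <-; have := H (Ordinal ha) (Ordinal hb).
    by rewrite inner_rows.
  have Hlow : forall e, (e <= 2 * k - 2)%N -> E e = 0.
    move=> e he.
    case: (leqP e (2 * k - 6)) => h1.
      refine (Hex e (minn e (k - 3))%N (e - minn e (k - 3))%N _ _ _); try lia.
      by rewrite !gl; lia.
    case: (leqP e (2 * k - 3)) => h2.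
      refine (Hex e (k - 2)%N (e - k)%N _ _ _); try lia.
      by rewrite gh ?gl; lia.
    refine (Hex e (k - 1)%N (k - 3)%N _ _ _); try lia.
    by rewrite gh ?gl; lia.
  have H0 : E (2 * k)%N = 0.
    by refine (Hex _ (k - 2)%N (k - 2)%N _ _ _); try lia; rewrite !gh; lia.
  have H1 : E (2 * k + 1)%N = 0.
    by refine (Hex _ (k - 2)%N (k - 1)%N _ _ _); try lia; rewrite !gh; lia.
  have H2 : E (2 * k + 2)%N = 0.
    by refine (Hex _ (k - 1)%N (k - 1)%N _ _ _); try lia; rewrite !gh; lia.
  pose f := \sum_(i < n) (v i ^+ 2) *: Lsub F n alpha i.
  have hf : forall i, v i ^+ 2 = ucoef alpha i * f.[alpha i].
    move=> i; rewrite /f horner_sum (bigD1 i) //= big1 ?addr0.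
      by rewrite hornerZ Lsub_eval eqxx mulrCA u_Pd // mulr1.
    by move=> j ji; rewrite hornerZ Lsub_eval eq_sym (negbTE ji) mulr0.
  have sf : (size f <= n)%N.
    rewrite /f; apply: (big_ind (fun p : {poly F} => (size p <= n)%N)).
    - by rewrite size_poly0.
    - by move=> p q hp hq; rewrite (leq_trans (size_add p q)) // geq_max hp hq.
    - by move=> i _; rewrite (leq_trans (size_scale_leq _ _)) // size_Lsub.
  have deg : forall m, (m <= 2 * k - 1)%N -> forall j, (n - m <= j)%N -> f`_j = 0.
    elim=> [|m IH] hm j hj.
      by apply: nth_default; rewrite (leq_trans sf) //; rewrite subn0 in hj.
    case: (ltnP j (n - m)) => hj2; last by apply: IH => //; lia.
    have szm : (size (f * 'X^m)%R <= n)%N.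
      apply/leq_sizeP => p hp; rewrite coefMXn; case: ifP => // _.
      apply: IH; lia.
    move/leq_sizeP: (szm) => z.
    have := Lam _ _ _ halpha _ n3 (leq_trans szm (leq_addr 3 n)).
    rewrite -ErelF // Hlow; last by lia.
    rewrite (z n (leqnn n)) (z n.+1 (leqnSn n)) (z n.+2 (leq_trans (leqnSn n) (leqnSn _))) !mul0r !addr0 coefMXn.
    have -> : (n.-1 < m)%N = false by lia.
    by have -> : (n.-1 - m = j)%N by lia.
  have n2k : (2 * k - 1 <= n)%N.
    case: (leqP (2 * k - 1) n) => // hlt.
    have f0 : f = 0.
      apply/polyP => j; rewrite coef0; apply: (deg (2 * k - 1)%N) => //; lia.
    have := hf i0; rewrite f0 horner0 mulr0 => /eqP; rewrite expf_eq0 /=.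
    by rewrite (negbTE (hv i0)).
  have sf2 : (size f <= n - (2 * k - 1))%N.
    by apply/leq_sizeP => j hj; apply: (deg (2 * k - 1)%N).
  have sfz : (size f)%:Z <= n%:Z - 2 * k%:Z + 1.
    by move: sf2; set A := size f => ?; lia.
  exists f; split => //; split => //.
  have L : forall e, (e <= 2 * k + 2)%N -> E e =
    coefz f (n%:Z - 1 - e%:Z) + coefz f (n%:Z - e%:Z) * hsym alpha 1
    + coefz f (n%:Z + 1 - e%:Z) * hsym alpha 2 + coefz f (n%:Z + 2 - e%:Z) * hsym alpha 3.
    move=> e he; rewrite (ErelF f hf) LamX //.
    by move: sf2; set A := size f => ?; lia.
  have cz : forall j : int, n%:Z - 2 * k%:Z < j -> coefz f j = 0.
    by move=> j hj; apply: coefz_big; move: sfz; set A := size f => ?; lia.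
  split; [move: H0 | split; [move: H1 | move: H2]]; rewrite L; try lia.
  + rewrite (cz (n%:Z + 1 - (2 * k)%N%:Z)); last by lia.
    rewrite (cz (n%:Z + 2 - (2 * k)%N%:Z)); last by lia.
    rewrite !mul0r !addr0.
    have -> : n%:Z - 1 - (2 * k)%N%:Z = n%:Z - 2 * k%:Z - 1 by lia.
    by have -> : n%:Z - (2 * k)%N%:Z = n%:Z - 2 * k%:Z by lia.
  + rewrite (cz (n%:Z + 2 - (2 * k + 1)%N%:Z)); last by lia.
    rewrite !mul0r !addr0.
    have -> : n%:Z - 1 - (2 * k + 1)%N%:Z = n%:Z - 2 * k%:Z - 2 by lia.
    have -> : n%:Z - (2 * k + 1)%N%:Z = n%:Z - 2 * k%:Z - 1 by lia.
    by have -> : n%:Z + 1 - (2 * k + 1)%N%:Z = n%:Z - 2 * k%:Z by lia.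
  + have -> : n%:Z - 1 - (2 * k + 2)%N%:Z = n%:Z - 2 * k%:Z - 3 by lia.
    have -> : n%:Z - (2 * k + 2)%N%:Z = n%:Z - 2 * k%:Z - 2 by lia.
    have -> : n%:Z + 1 - (2 * k + 2)%N%:Z = n%:Z - 2 * k%:Z - 1 by lia.
    by have -> : n%:Z + 2 - (2 * k + 2)%N%:Z = n%:Z - 2 * k%:Z by lia.
- move=> r s; rewrite inner_rows.
  set e := (gexp k r + gexp k s)%N.
  have he : (e <= 2 * k - 2 \/ e = 2 * k \/ e = 2 * k + 1 \/ e = 2 * k + 2)%N.
    move: (ltn_ord r) (ltn_ord s) => hr hs2.
    rewrite /e /gexp; case: ltnP => ?; case: ltnP => ?; lia.
  have L : E e =
    coefz f (n%:Z - 1 - e%:Z) + coefz f (n%:Z - e%:Z) * hsym alpha 1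
    + coefz f (n%:Z + 1 - e%:Z) * hsym alpha 2 + coefz f (n%:Z + 2 - e%:Z) * hsym alpha 3.
    rewrite (ErelF f hv2) LamX //.
    by move: hs; set A := size f => ?; lia.
  have cz : forall j : int, n%:Z - 2 * k%:Z < j -> coefz f j = 0.
    by move=> j hj; apply: coefz_big; move: hs; set A := size f => ?; lia.
  rewrite -/(E e) L.
  case: he => [he|[he|[he|he]]].
  + rewrite !cz ?mul0r ?addr0 //; lia.
  + rewrite he (cz (n%:Z + 1 - (2 * k)%N%:Z)); last by lia.
    rewrite (cz (n%:Z + 2 - (2 * k)%N%:Z)); last by lia.
    rewrite !mul0r !addr0 -c1; congr (coefz f _ + coefz f _ * _); lia.
  + rewrite he (cz (n%:Z + 2 - (2 * k + 1)%N%:Z)); last by lia.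
    rewrite !mul0r !addr0 -c2; congr (coefz f _ + coefz f _ * _ + coefz f _ * _); lia.
  + rewrite he -c3; congr (coefz f _ + coefz f _ * _ + coefz f _ * _ + coefz f _ * _); lia.
Qed.
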